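(* Let $n>2$ be an integer and $M\in\mathrm{Mat}(2,\mathbb{Z})$ with $\det(M)\equiv-1\pmod n$, and suppose $M$ is reversible mod $n$. Then $M^2\equiv\mathbb{1}\pmod n$ if $n$ is odd, and $M^2\equiv\mathbb{1}\pmod{n/2}$ if $n$ is even.
   Context: An integer matrix $M$ whose determinant is a unit mod $n$ is reversible mod $n$ if there exists $R\in\mathrm{GL}(2,\mathbb{Z}/n\mathbb{Z})$ with $RMR^{-1}\equiv M^{-1}\pmod n$, where $M^{-1}$ is the inverse of $M$ over $\mathbb{Z}/n\mathbb{Z}$. *)

(* Defs.v *)
From HB Require Import structures.
From mathcomp Require Import all_boot all_order all_algebra.
Set Implicit Arguments. Unset Strict Implicit. Unset Printing Implicit Defensive.
Import Order.TTheory GRing.Theory Num.Theory.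
Local Open Scope ring_scope.

(* Reduction of an integer 2x2 matrix modulo n, as a matrix over 'Z_n.
   (Only used with 1 < n, where 'Z_n is Z/nZ.) *)
Definition mx_mod (n : nat) (M : 'M[int]_2) : 'M['Z_n]_2 :=
  map_mx (fun z : int => z%:~R) M.

Definition reversible_mod (n : nat) (M : 'M[int]_2) : Prop :=
  exists R : 'M['Z_n]_2,
    R \in unitmx /\ R *m mx_mod n M *m invmx R = invmx (mx_mod n M).

(* Main.v *)
Require Import Defs.
From HB Require Import structures.
From mathcomp Require Import all_boot all_order all_algebra.
From mathcomp Require Import ring.
Import Order.TTheory GRing.Theory Num.Theory.
Local Open Scope ring_scope.

Lemma ord2P (i : 'I_2) : i = 0 \/ i = 1.
Proof. by case: i => [[|[|k]]] Hi; [left; apply/val_inj|right; apply/val_inj|by []]. Qed.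

Lemma mulmx2 (R : comNzRingType) (X Y : 'M[R]_2) i j :
  (X *m Y) i j = X i 0 * Y 0 j + X i 1 * Y 1 j.
Proof.
rewrite mxE !big_ord_recl big_ord0 addr0.
have e1 : lift ord0 ord0 = 1 :> 'I_2 by apply: val_inj.
have e5 : ord0 = 0 :> 'I_2 by apply: val_inj.
by rewrite e1 e5.
Qed.

Lemma trace2 (R : comNzRingType) (X : 'M[R]_2) : \tr X = X 0 0 + X 1 1.
Proof.
rewrite /mxtrace !big_ord_recl big_ord0 addr0.
have e1 : lift ord0 ord0 = 1 :> 'I_2 by apply: val_inj.
have e5 : ord0 = 0 :> 'I_2 by apply: val_inj.
by rewrite e1 e5.
Qed.

Lemma det2 (R : comNzRingType) (A : 'M[R]_2) : \det A = A 0 0 * A 1 1 - A 0 1 * A 1 0.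
Proof.
rewrite (expand_det_row _ 0) !big_ord_recl big_ord0 /cofactor !det_mx11 !mxE /=.
rewrite addr0.
have e1 : lift 0 0 = 1 :> 'I_2 by apply: val_inj.
have e2 : lift ord0 0 = 1 :> 'I_2 by apply: val_inj.
have e3 : lift ord0 ord0 = 1 :> 'I_2 by apply: val_inj.
have e4 : lift (lift ord0 ord0) 0 = 0 :> 'I_2 by apply: val_inj.
have e5 : ord0 = 0 :> 'I_2 by apply: val_inj.
have e6 : lift 1 0 = 0 :> 'I_2 by apply: val_inj.
by rewrite ?e1 ?e2 ?e3 ?e4 ?e5 ?e6 /= ?expr0 ?expr1 ?mul1r ?mulN1r ?mulrN.
Qed.

Lemma intr_Zp_eq0 n (z : int) : (1 < n)%N -> (z%:~R : 'Z_n) = 0 -> (n%:Z %| z)%Z.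
Proof.
move=> n1.
have key k : (k%:R : 'Z_n) = 0 -> (n %| k)%N.
  move=> H; have := val_Zp_nat n1 k; rewrite H /= => /esym/eqP.
  by rewrite -/(dvdn n k).
case: z => k.
- by rewrite -pmulrn => /key.
- rewrite NegzE mulrNz => /eqP; rewrite oppr_eq0 -pmulrn => /eqP /key.
  by move=> H; exact: H.
Qed.

Lemma intr_Zp_mod n (z w : int) : (1 < n)%N -> (z = w %[mod n])%Z ->
  (z%:~R : 'Z_n) = w%:~R.
Proof.
move=> n1 /eqP; rewrite eqz_mod_dvd => /dvdzP [q Hq].
apply/eqP; rewrite -subr_eq0 -rmorphB /= Hq intrM.
have -> : ((n%:Z)%:~R : 'Z_n) = n%:R by rewrite -pmulrn.
by rewrite pchar_Zp // mulr0.
Qed.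

Theorem corollary4p10 (n : nat) (M : 'M[int]_2) :
  (2 < n)%N ->
  (\det M = -1 %[mod n])%Z ->
  reversible_mod n M ->
  (~~ odd n -> forall i j : 'I_2,
     ((M *m M) i j = (1%:M : 'M[int]_2) i j %[mod (n %/ 2)%N])%Z) /\
  (odd n -> forall i j : 'I_2,
     ((M *m M) i j = (1%:M : 'M[int]_2) i j %[mod n])%Z).
Proof.
move=> n2 hdet [R [RU hR]].
have n1 : (1 < n)%N by apply: ltnW.
set A := mx_mod n M in hR.
have Aij i j : A i j = (M i j)%:~R by rewrite /A /mx_mod mxE.
have detA : \det A = -1.
  rewrite det2 !Aij -!intrM -rmorphB /= -det2.
  by rewrite (@intr_Zp_mod n _ _ n1 hdet).
have AU : A \in unitmx by rewrite unitmxE detA unitrN unitr1.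
have trB : \tr (invmx A) = \tr A.
  rewrite -hR mxtrace_mulC mulmxA mulVmx // mul1mx //.
set B := invmx A in trB.
have AB : A *m B = 1%:M by rewrite mulmxV.
have h00 : (A *m B) 0 0 = (1%:M : 'M_2) 0 0 by rewrite AB.
have h01 : (A *m B) 0 1 = (1%:M : 'M_2) 0 1 by rewrite AB.
have h10 : (A *m B) 1 0 = (1%:M : 'M_2) 1 0 by rewrite AB.
have h11 : (A *m B) 1 1 = (1%:M : 'M_2) 1 1 by rewrite AB.
move: h00 h01 h10 h11; rewrite /= !mulmx2 !mxE /= => h00 h01 h10 h11.
move: detA; rewrite det2 => detA.
move: trB; rewrite !trace2 => trB.
set t := M 0 0 + M 1 1.
have t0 : ((t * 2)%:~R : 'Z_n) = 0.
  rewrite intrM /t rmorphD /= -!Aij.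
  move: h00 h01 h10 h11; rewrite -!Aij => h00 h01 h10 h11.
  have S : B 0 0 + B 1 1 + (A 0 0 + A 1 1) = 0.
    have -> : B 0 0 + B 1 1 + (A 0 0 + A 1 1) =
      B 0 0 * (1 + (A 0 0 * A 1 1 - A 0 1 * A 1 0))
      - A 1 1 * (A 0 0 * B 0 0 + A 0 1 * B 1 0 - 1)
      + A 0 1 * (A 1 0 * B 0 0 + A 1 1 * B 1 0)
      + B 1 1 * (1 + (A 0 0 * A 1 1 - A 0 1 * A 1 0))
      - A 0 0 * (A 1 0 * B 0 1 + A 1 1 * B 1 1 - 1)
      + A 1 0 * (A 0 0 * B 0 1 + A 0 1 * B 1 1) by ring.
    rewrite detA h00 h10 h11 h01; ring.
  transitivity (B 0 0 + B 1 1 + (A 0 0 + A 1 1)); last exact: S.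
  rewrite trB; ring.
have t2 := @intr_Zp_eq0 n _ n1 t0.
have dn : (n%:Z %| \det M + 1)%Z.
  by move/eqP: hdet; rewrite eqz_mod_dvd opprK.
have CH i j : (M *m M) i j - (1%:M : 'M[int]_2) i j = t * M i j - (\det M + 1) *+ (i == j).
  rewrite mulmx2 !mxE det2 /t.
  by case: (ord2P i) => ->; case: (ord2P j) => -> /=; ring.
have fin (d : nat) : (d %| t)%Z -> (d %| \det M + 1)%Z ->
    forall i j : 'I_2, ((M *m M) i j = (1%:M : 'M[int]_2) i j %[mod d])%Z.
  move=> dt dd i j; apply/eqP; rewrite eqz_mod_dvd CH.
  rewrite rpredB //; first exact: dvdz_mulr.
  by rewrite rpredMn.
split.
- move=> ev; have n2e : n = ((n %/ 2) * 2)%N by rewrite divnK // dvdn2.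
  apply: fin.
  + have : (((n %/ 2) * 2)%N %| t * 2)%Z by rewrite -n2e.
    by rewrite PoszM dvdz_mul2r.
  + apply: dvdz_trans dn.
    have -> : (n%:Z) = ((n %/ 2)%N * 2)%N by rewrite -n2e.
    by rewrite PoszM; apply: dvdz_mulr.
- move=> od; apply: fin => //.
  by move: t2; rewrite mulrC Gauss_dvdzr // coprimezE /= coprimen2.
Qed.
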